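(* Let $d,T\ge 1$ be integers, let $c\ge 0$, and let $\boldsymbol\theta_0,\dots,\boldsymbol\theta_{T-1}\in\mathbb{R}^{d\times d}$ be orthogonal matrices. Define $\lambda_T=0$ and, for $t=T-1,\dots,0$, $\lambda_t=\frac{c(1+\lambda_{t+1})}{1+c+\lambda_{t+1}}$ (so $\lambda_{T-1}=\frac{c}{1+c}$), and set $\alpha_t=\frac{c}{1+\lambda_{t+1}+c}$ for $t=0,\dots,T-1$. Let $Z_0^{\parallel},\dots,Z_{T}^{\parallel}\subseteq\mathbb{R}^d$ be linear subspaces with $\boldsymbol\theta_t Z_t^{\parallel}=Z_{t+1}^{\parallel}$ for all $t$, let $\mathbf{P}_t$ be the orthogonal projection onto $Z_t^{\parallel}$, and define the feedback controls $\pi_t(\mathbf{x})=-(1-\alpha_t)(\mathbf{I}-\mathbf{P}_t)\mathbf{x}$. Let $\mathbf{x}_0\in Z_0^{\parallel}$ and let $\mathbf{x}_{t+1}=\boldsymbol\theta_t\mathbf{x}_t$ (unperturbed, uncontrolled trajectory). Let $\mathbf{z}=\mathbf{z}^{\parallel}+\mathbf{z}^{\perp}$ with $\mathbf{z}^{\parallel}\in Z_0^{\parallel}$ and $\mathbf{z}^{\perp}\in (Z_0^{\parallel})^{\perp}$, and define the perturbed controlled trajectory $\overline{\mathbf{x}}_0=\mathbf{x}_0+\mathbf{z}$, $\overline{\mathbf{x}}_{t+1}=\boldsymbol\theta_t(\overline{\mathbf{x}}_t+\pi_t(\overline{\mathbf{x}}_t))$. Then for every $1\le t\le T$, $$\lVert\overline{\mathbf{x}}_t-\mathbf{x}_t\rVert_2^2=\Big(\prod_{s=0}^{t-1}\alpha_s^2\Big)\lVert\mathbf{z}^{\perp}\rVert_2^2+\lVert\mathbf{z}^{\parallel}\rVert_2^2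 .$$
   Context: This models a $T$-layer network whose layer maps are linearized as orthogonal matrices $\boldsymbol\theta_t$, with a linear ''embedding subspace'' $Z_t^{\parallel}$ of the data at each layer (the unperturbed input lies in $Z_0^{\parallel}$). The control $\pi_t$ is the analytic optimal feedback control $\pi_t(\mathbf{x})=-\mathbf{V}_t\,\mathrm{diag}(0,\dots,0,1-\alpha_t,\dots,1-\alpha_t)\mathbf{V}_t^\top\mathbf{x}$, where $\mathbf{V}_t$ is an orthogonal matrix whose first columns span $Z_t^{\parallel}$ and whose remaining columns (those with entry $1-\alpha_t$) span its orthogonal complement; this equals $-(1-\alpha_t)(\mathbf{I}-\mathbf{P}_t)\mathbf{x}$. *)

(* Defs.v *)
From mathcomp Require Import all_boot all_order all_algebra.
Set Implicit Arguments. Unset Strict Implicit. Unset Printing Implicit Defensive.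
Import Order.TTheory GRing.Theory Num.Theory.
Local Open Scope ring_scope.

(* A linear subspace of R^d is
   represented (mxalgebra style) by a matrix whose ROW space is the subspace;
   a column vector x belongs to it iff (x^T <= Z)%MS. *)
Definition in_sub (R : fieldType) (d : nat) (x : 'cV[R]_d) (Z : 'M[R]_d) : bool :=
  (x^T <= Z)%MS.

Definition sqnorm (R : ringType) (d : nat) (x : 'cV[R]_d) : R :=
  \sum_(i < d) (x i 0) ^+ 2.

Definition dotv (R : ringType) (d : nat) (x y : 'cV[R]_d) : R :=
  \sum_(i < d) x i 0 * y i 0.

Definition orthogonal_mx (R : ringType) (d : nat) (A : 'M[R]_d) : Prop :=
  A^T *m A = 1%:M.

Definition in_orth_compl (R : fieldType) (d : nat) (x : 'cV[R]_d) (Z : 'M[R]_d) : Prop :=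
  forall y : 'cV[R]_d, in_sub y Z -> dotv y x = 0.

Definition is_orth_proj (R : fieldType) (d : nat) (P Z : 'M[R]_d) : Prop :=
  [/\ P^T = P, P *m P = P & forall x : 'cV[R]_d, in_sub x Z <-> P *m x = x].

Fixpoint lam_aux (R : fieldType) (c : R) (k : nat) : R :=
  match k with
  | 0 => 0
  | k'.+1 => let l := lam_aux c k' in c * (1 + l) / (1 + c + l)
  end.

Definition lambda (R : fieldType) (c : R) (T t : nat) : R := lam_aux c (T - t).

Definition alpha (R : fieldType) (c : R) (T t : nat) : R :=
  c / (1 + lambda c T t.+1 + c).

Definition control (R : fieldType) (d : nat) (c : R) (T : nat)
  (P : nat -> 'M[R]_d) (t : nat) (x : 'cV[R]_d) : 'cV[R]_d :=
  - ((1 - alpha c T t) *: ((1%:M - P t) *m x)).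

Fixpoint traj (R : ringType) (d : nat) (theta : nat -> 'M[R]_d) (x0 : 'cV[R]_d)
  (t : nat) : 'cV[R]_d :=
  match t with
  | 0 => x0
  | t'.+1 => theta t' *m traj theta x0 t'
  end.

Fixpoint ctraj (R : fieldType) (d : nat) (c : R) (T : nat)
  (theta P : nat -> 'M[R]_d) (xb0 : 'cV[R]_d) (t : nat) : 'cV[R]_d :=
  match t with
  | 0 => xb0
  | t'.+1 => let y := ctraj c T theta P xb0 t' in
             theta t' *m (y + control c T P t' y)
  end.

(* Main.v *)
Require Import Defs.
From mathcomp Require Import all_boot all_order all_algebra.
From mathcomp Require Import ring.
Import Order.TTheory GRing.Theory Num.Theory.
Local Open Scope ring_scope.

Section Aux.
Variable R : realFieldType.
Variable d : nat.
Implicit Types (x y u v : 'cV[R]_d) (A : 'M[R]_d).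

Lemma sqnormE x : sqnorm x = (x^T *m x) 0 0.
Proof. rewrite /sqnorm mxE; apply: eq_bigr => i _; by rewrite !mxE expr2. Qed.

Lemma dotvE x y : dotv x y = (x^T *m y) 0 0.
Proof. rewrite /dotv mxE; apply: eq_bigr => i _; by rewrite !mxE. Qed.

Lemma sqnorm_eq0 x : sqnorm x = 0 -> x = 0.
Proof.
rewrite /sqnorm => /eqP; rewrite psumr_eq0 => [/allP H|i _]; last exact: sqr_ge0.
apply/matrixP => i j; rewrite ord1 mxE.
have := H i (mem_index_enum i); rewrite /= sqrf_eq0 => /eqP //.
Qed.

Lemma sqnorm_orth A x : A^T *m A = 1%:M -> sqnorm (A *m x) = sqnorm x.
Proof. by move=> H; rewrite !sqnormE trmx_mul -mulmxA (mulmxA A^T) H mul1mx. Qed.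

Lemma sqnorm_add u v (b : R) : dotv u v = 0 ->
  sqnorm (u + b *: v) = sqnorm u + b ^+ 2 * sqnorm v.
Proof.
move=> H; rewrite /sqnorm.
rewrite (eq_bigr (fun i => u i 0 ^+ 2 + (b *+ 2) * (u i 0 * v i 0) + b ^+ 2 * v i 0 ^+ 2)); last first.
  by move=> i _; rewrite !mxE; ring.
rewrite !big_split /= -!mulr_sumr.
by move: H; rewrite /dotv => ->; rewrite mulr0 addr0.
Qed.

Lemma proj_perp A Z v : is_orth_proj A Z -> in_orth_compl v Z -> A *m v = 0.
Proof.
case=> hT hI hZ hv; apply: sqnorm_eq0.
have : in_sub (A *m v) Z by apply/hZ; rewrite mulmxA hI.
move/hv; rewrite dotvE sqnormE trmx_mul hT => H.
by rewrite -mulmxA (mulmxA A) hI mulmxA.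
Qed.
End Aux.
Arguments proj_perp {R d A Z v}.

Theorem theorem1 (R : realFieldType) (d T : nat) (hd : (1 <= d)%N) (hT : (1 <= T)%N)
  (c : R) (hc : 0 <= c)
  (theta : nat -> 'M[R]_d) (Z : nat -> 'M[R]_d) (P : nat -> 'M[R]_d)
  (htheta : forall t, (t < T)%N -> orthogonal_mx (theta t))
  (hZ : forall t, (t < T)%N -> (Z t *m (theta t)^T :=: Z t.+1)%MS)
  (hP : forall t, (t <= T)%N -> is_orth_proj (P t) (Z t))
  (x0 zpar zperp : 'cV[R]_d)
  (hx0 : in_sub x0 (Z 0%N))
  (hzpar : in_sub zpar (Z 0%N))
  (hzperp : in_orth_compl zperp (Z 0%N)) :
  forall t, (1 <= t <= T)%N ->
    sqnorm (ctraj c T theta P (x0 + (zpar + zperp)) t - traj theta x0 t) =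
      (\prod_(s < t) (alpha c T s) ^+ 2) * sqnorm zperp + sqnorm zpar.
Proof.
have sub_step : forall t x, (t < T)%N -> in_sub x (Z t) -> in_sub (theta t *m x) (Z t.+1).
  by move=> t x ht hx; rewrite /in_sub -(hZ t ht) trmx_mul submxMr.
have orth_step : forall t v, (t < T)%N -> in_orth_compl v (Z t) ->
    in_orth_compl (theta t *m v) (Z t.+1).
  move=> t v ht hv y; rewrite /in_sub -(hZ t ht) => /submxP [D hD].
  have hw : in_sub (D *m Z t)^T (Z t) by rewrite /in_sub trmxK submxMl.
  have ey : y = theta t *m (D *m Z t)^T.
    by rewrite -[y]trmxK hD !trmx_mul trmxK mulmxA.
  rewrite ey dotvE trmx_mul -mulmxA (mulmxA (theta t)^T) (htheta t ht) mul1mx.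
  by rewrite -dotvE; apply: hv.
have sub_traj : forall x t, in_sub x (Z 0%N) -> (t <= T)%N -> in_sub (traj theta x t) (Z t).
  move=> x; elim=> [|t IH] hx ht //=; apply: sub_step => //; apply: IH => //; exact: ltnW.
have orth_traj : forall t, (t <= T)%N -> in_orth_compl (traj theta zperp t) (Z t).
  elim=> [//|t IH] ht /=; apply: orth_step => //; apply: IH; exact: ltnW.
have key : forall t, (t <= T)%N ->
  ctraj c T theta P (x0 + (zpar + zperp)) t =
  traj theta x0 t + traj theta zpar t + (\prod_(s < t) alpha c T s) *: traj theta zperp t.
  elim=> [_|t IH ht] /=; first by rewrite big_ord0 scale1r addrA.
  have ht' : (t <= T)%N by exact: ltnW.
  rewrite IH // /control.
  case: (hP t ht') => _ _ hPZ.
  have e1 := proj1 (hPZ _) (sub_traj x0 t hx0 ht').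
  have e2 := proj1 (hPZ _) (sub_traj zpar t hzpar ht').
  have e3 := proj_perp (hP t ht') (orth_traj t ht').
  rewrite !mulmxBl !mul1mx !mulmxDr -!scalemxAr e1 e2 e3 scaler0 ?subr0 big_ord_recr /=.
  set a := alpha c T t; set b := \prod_(i < t) alpha c T i.
  rewrite addr0 [traj _ x0 t + _ + b *: _]addrC.
  rewrite (_ : forall u v : 'cV[R]_d, u + v - v = u); last by move=> *; rewrite addrK.
  rewrite mulmxN -!scalemxAr scalerA -addrA -scalerBl.
  by congr (_ + _ *: _); ring.
move=> t /andP [_ ht].
rewrite key // -[traj theta x0 t + _ + _]addrA [traj theta x0 t + _]addrC addrK.
rewrite sqnorm_add; last first.
  apply: orth_traj => //; exact: sub_traj.
rewrite prodrXl addrC.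
have orthn : forall x t, (t <= T)%N -> sqnorm (traj theta x t) = sqnorm x.
  move=> x; elim=> [//|s IH] hs /=; rewrite sqnorm_orth; [apply: IH; exact: ltnW|exact: htheta].
by rewrite !orthn.
Qed.
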